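(* Every sequential transduction belongs to $\mathsf{Lex}_1$.
   Context: A sequential transducer over alphabets $\Sigma,\Gamma$ is a deterministic finite automaton $A=(Q,q_0,F,\delta)$ over $\Sigma$ together with an output function $\mu:\mathrm{dom}(\delta)\to\Gamma^*$. The transduction it computes is defined exactly on $L(A)$, mapping $u$ to the concatenation of the outputs $\mu(q,\sigma)$ along the run of $A$ on $u$. A sequential transduction is one computed by a sequential transducer. Alphabets are finite. For words $u,v$ of equal length over alphabets $\Sigma_1,\Sigma_2$, $u\otimes v$ is the word over $\Sigma_1\times\Sigma_2$ with $(u\otimes v)[i]=(u[i],v[i])$. A transduction is a partial function $f:\Sigma^*\rightharpoonup\Gamma^*$. A simple transduction is a transduction $f=\sum_{i=1}^n L_i\triangleright w_i$, where $L_1,\dots,L_n\subseteq\Sigma^*$ are pairwise disjoint regular languages and each $w_i\in\Gamma^{\le 1}$ is a word of length at most 1. It satisfies $f(u)=w_i$ if $u\in L_i$, and $f(u)$ is undefined if $u\notin\bigcup_iL_i$. An ordered alphabet is a pair $\lambda=(B,\prec)$ with $B$ a finite set and $\prec$ a strict linear order on $B$. The order is extended to $B^n$ for each $n$ by: $u\prec v$ iff there is $i\le n$ with $u[i]\prec v[i]$ and $u[j]=v[j]$ for all $i<j\le n$ (most significant letter on the right). For a transduction $f:(\Sigma\times B)^*\rightharpoonup\Gamma^*$, the transduction $\mathsf{maplex}_\lambda f:\Sigma^*\rightharpoonup\Gamma^*$ maps $u$ to $f(u\otimes b_1)f(u\otimes b_2)\cdots f(u\otimes b_m)$, where $b_1\prec\cdots\prec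 b_m$ is the increasing enumeration of all of $B^{|u|}$. It is defined on $u$ iff every $f(u\otimes b_j)$ is defined. $\mathsf{Lex}_1$ is the class of transductions $\mathsf{maplex}_\lambda f$ with $\lambda=(B,\prec)$ an ordered alphabet and $f:(\Sigma\times B)^*\rightharpoonup\Gamma^*$ a simple transduction. *)

(* Defs.v *)
From mathcomp Require Import all_boot.
Set Implicit Arguments. Unset Strict Implicit. Unset Printing Implicit Defensive.

Definition transduction (Sigma Gamma : Type) := seq Sigma -> option (seq Gamma).

Fixpoint dfa_accepts (Sigma Q : Type) (F : pred Q) (delta : Q -> Sigma -> option Q)
    (q : Q) (u : seq Sigma) : bool :=
  match u with
  | [::] => F q
  | a :: u' => match delta q a with
               | Some q' => dfa_accepts F delta q' u'
               | None => false
               end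
  end.

Definition regular (Sigma : Type) (L : pred (seq Sigma)) : Prop :=
  exists (Q : finType) (q0 : Q) (F : pred Q) (delta : Q -> Sigma -> option Q),
    forall u, L u = dfa_accepts F delta q0 u.

Fixpoint seq_run (Sigma Gamma Q : Type) (F : pred Q) (delta : Q -> Sigma -> option Q)
    (mu : Q -> Sigma -> seq Gamma) (q : Q) (u : seq Sigma) : option (seq Gamma) :=
  match u with
  | [::] => if F q then Some [::] else None
  | a :: u' => match delta q a with
               | Some q' => omap (fun w => mu q a ++ w) (seq_run F delta mu q' u')
               | None => None
               end
  end.

(* mu is only meaningful on dom(delta); its values elsewhere are never used. *)
Definition sequential (Sigma Gamma : Type) (g : transduction Sigma Gamma) : Prop :=
  exists (Q : finType) (q0 : Q) (F : pred Q) (delta : Q -> Sigma -> option Q)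
         (mu : Q -> Sigma -> seq Gamma),
    forall u, g u = seq_run F delta mu q0 u.

Definition simple_transduction (Sigma Gamma : Type) (f : transduction Sigma Gamma) : Prop :=
  exists (n : nat) (L : 'I_n -> pred (seq Sigma)) (w : 'I_n -> seq Gamma),
    [/\ forall i, regular (L i),
        forall i, size (w i) <= 1,
        forall i j u, i != j -> L i u -> L j u -> False,
        forall i u, L i u -> f u = Some (w i)
      & forall u, (forall i, ~~ L i u) -> f u = None].

Definition strict_linear_order (B : eqType) (lt : rel B) : Prop :=
  [/\ irreflexive lt, transitive lt & forall x y, x != y -> lt x y || lt y x].

(* Extension to B^n: most significant letter on the right. *)
Definition lex_lt (B : eqType) (lt : rel B) (n : nat) (u v : n.-tuple B) : bool :=
  [exists i : 'I_n, lt (tnth u i) (tnth v i) &&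
     [forall j : 'I_n, (i < j) ==> (tnth u j == tnth v j)]].

Definition lex_enum (B : finType) (lt : rel B) (n : nat) : seq (n.-tuple B) :=
  sort (fun a b => (a == b) || lex_lt lt a b) (enum [set: n.-tuple B]).

(* u (x) b, used only for b of length |u|. *)
Definition tensor (Sigma B : Type) (u : seq Sigma) (b : seq B) : seq (Sigma * B) :=
  zip u b.

Definition maplex (Sigma Gamma : Type) (B : finType) (lt : rel B)
    (f : transduction (Sigma * B) Gamma) : transduction Sigma Gamma :=
  fun u =>
    foldr (fun (b : (size u).-tuple B) acc => obind (fun w => omap (fun r => w ++ r) acc) (f (tensor u (tval b))))
          (Some [::]) (lex_enum lt (size u)).

Definition Lex1 (Sigma Gamma : Type) (g : transduction Sigma Gamma) : Prop :=
  exists (B : finType) (lt : rel B) (f : transduction (Sigma * B) Gamma),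
    [/\ strict_linear_order lt, simple_transduction f & forall u, g u = maplex lt f u].

(* Main.v *)
Require Import Defs.
From mathcomp Require Import all_boot.
Set Implicit Arguments. Unset Strict Implicit. Unset Printing Implicit Defensive.

Definition ltB (m : nat) : rel 'I_m := fun x y => (x < y)%N.

Lemma ltB_slo m : strict_linear_order (@ltB m).
Proof.
split.
- by move=> x; rewrite /ltB ltnn.
- by move=> x y z; rewrite /ltB; apply: ltn_trans.
- move=> x y; rewrite /ltB -val_eqE /=; case: ltngtP => //.
Qed.

Lemma lex_total m n (a b : n.-tuple 'I_m) :
  a != b -> lex_lt (@ltB m) a b || lex_lt (@ltB m) b a.
Proof.
move=> ab.
have [i0 Hi0] : exists i, tnth a i != tnth b i.
  apply/existsP; apply: contraR ab; rewrite negb_exists => /forallP H.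
  by apply/eqP/eq_from_tnth => i; move: (H i); rewrite negbK => /eqP.
case: (@arg_maxnP _ i0 (fun i => tnth a i != tnth b i) (fun i : 'I_n => val i) Hi0) => i Hi Hmax.
have Hj : forall j : 'I_n, (i < j)%N ==> (tnth a j == tnth b j).
  move=> j; apply/implyP => ij; apply: contraTT ij => /Hmax; rewrite -leqNgt //.
move: Hi; rewrite -val_eqE /=; case: ltngtP => // H _.
- apply/orP; left; apply/existsP; exists i; rewrite /ltB H /=; exact/forallP.
- apply/orP; right; apply/existsP; exists i; rewrite /ltB H /=.
  apply/forallP => j; apply/implyP => ij; move: (Hj j); rewrite ij /= eq_sym; exact.
Qed.

Lemma lex_trans m n : transitive (@lex_lt _ (@ltB m) n).
Proof.
move=> b a c /existsP [i /andP [Hi /forallP Hai]] /existsP [i' /andP [Hi' /forallP Hbi]].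
apply/existsP; case: (ltngtP i i') => H.
- exists i'; move: (Hai i'); rewrite H /= => /eqP ->; rewrite Hi' /=.
  apply/forallP => j; apply/implyP => ij.
  move: (Hai j) (Hbi j); rewrite ij (ltn_trans H ij) /= => /eqP -> //.
- exists i; move: (Hbi i); rewrite H /= => /eqP <-; rewrite Hi /=.
  apply/forallP => j; apply/implyP => ij.
  move: (Hai j) (Hbi j); rewrite ij (ltn_trans H ij) /= => /eqP -> //.
- have ei : i = i' by apply: val_inj.
  subst i'; exists i; rewrite /ltB (ltn_trans Hi Hi') /=.
  apply/forallP => j; apply/implyP => ij.
  move: (Hai j) (Hbi j); rewrite ij /= => /eqP -> //.
Qed.

Lemma lex_asym m n (a b : n.-tuple 'I_m) :
  lex_lt (@ltB m) a b -> lex_lt (@ltB m) b a -> False.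
Proof.
move=> /existsP [i /andP [Hi /forallP Hai]] /existsP [i' /andP [Hi' /forallP Hbi]].
move: Hi Hi'; rewrite /ltB.
case: (ltngtP i i') => H.
- by move: (Hai i'); rewrite H /= => /eqP ->; rewrite ltnn.
- by move: (Hbi i); rewrite H /= => /eqP ->; rewrite ltnn.
- have ei : i = i' by apply: val_inj.
  by subst i' => h1 h2; move: (ltn_trans h1 h2); rewrite ltnn.
Qed.

Definition leL m n (a b : n.-tuple 'I_m) := (a == b) || lex_lt (@ltB m) a b.

Lemma leL_total m n : total (@leL m n).
Proof.
move=> a b; case: (eqVneq a b) => [->|ab]; first by rewrite /leL eqxx.
rewrite /leL. idtac. move: (lex_total ab). by case/orP => ->; rewrite ?orbT.
Qed.

Lemma leL_trans m n : transitive (@leL m n).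
Proof.
move=> b a c; rewrite /leL => /orP [/eqP -> //|H1] /orP [/eqP <-|H2]; rewrite ?H1 ?orbT //.
by rewrite (lex_trans H1 H2) orbT.
Qed.

Lemma leL_anti m n : antisymmetric (@leL m n).
Proof.
move=> a b /andP []; rewrite /leL => /orP [/eqP -> //|H1] /orP [/eqP -> //|H2].
by case: (lex_asym H1 H2).
Qed.

Lemma lex_enum_sorted m n : sorted (@leL m n) (lex_enum (@ltB m) n).
Proof. exact: (sort_sorted (@leL_total m n)). Qed.

Lemma map_constE (T U : Type) (x : U) (s : seq T) : map (fun _ => x) s = nseq (size s) x.
Proof. by elim: s => //= ? ? ->. Qed.

Definition ostep (Sigma Q : Type) (delta : Q -> Sigma -> option Q) (oq : option Q) (a : Sigma) :=
  obind (fun q => delta q a) oq.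
Definition mu' (Sigma Gamma Q : Type) (mu : Q -> Sigma -> seq Gamma) (oq : option Q) (a : Sigma) :=
  if oq is Some q then mu q a else [::].
Definition mu'' (Sigma Gamma Q : Type) (mu : Q -> Sigma -> seq Gamma) (oq : option Q) (s : seq Sigma) :=
  if s is a :: _ then mu' mu oq a else [::].
Fixpoint out_seq (Sigma Gamma Q : Type) (delta : Q -> Sigma -> option Q) (mu : Q -> Sigma -> seq Gamma)
   (oq : option Q) (u : seq Sigma) : seq Gamma :=
  if u is a :: u' then mu' mu oq a ++ out_seq delta mu (ostep delta oq a) u' else [::].
Definition accq (Q : Type) (F : pred Q) (oq : option Q) := if oq is Some q then F q else false.

Lemma foldl_ostep_None (Sigma Q : Type) (delta : Q -> Sigma -> option Q) u :
  foldl (ostep delta) None u = None.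
Proof. by elim: u. Qed.

Lemma seq_run_eq (Sigma Gamma Q : Type) (F : pred Q) (delta : Q -> Sigma -> option Q)
  (mu : Q -> Sigma -> seq Gamma) u q :
  seq_run F delta mu q u =
  if accq F (foldl (ostep delta) (Some q) u) then Some (out_seq delta mu (Some q) u) else None.
Proof.
elim: u q => [|a u IH] q //=.
idtac.
case: (delta q a) => [q'|]; last by rewrite foldl_ostep_None.
by rewrite IH; case: accq.
Qed.

Lemma out_seq_iota (Sigma Gamma Q : Type) (delta : Q -> Sigma -> option Q)
  (mu : Q -> Sigma -> seq Gamma) u oq :
  out_seq delta mu oq u =
  flatten [seq mu'' mu (foldl (ostep delta) oq (take i u)) (drop i u) | i <- iota 0 (size u)].
Proof.
elim: u oq => [|a u IH] oq //=.
rewrite IH (iotaDl 1 0) -map_comp /=; congr (_ ++ _).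
Qed.

Definition phstep (Sigma Gamma Q : Type) (K : nat) (mu : Q -> Sigma -> seq Gamma)
  (oq : option Q) (a : Sigma) (p : option (option Gamma)) (b : 'I_K.+2) : option (option Gamma) :=
  match p with
  | None => if b == ord_max then None else if b == ord0 then Some None
            else Some (ohead (drop b.-1 (mu' mu oq a)))
  | Some c => if b == ord0 then Some c else Some None
  end.

Definition stp (Sigma Gamma Q : Type) (K : nat) (delta : Q -> Sigma -> option Q)
  (mu : Q -> Sigma -> seq Gamma) (s : option Q * option (option Gamma)) (x : Sigma * 'I_K.+2) :=
  (ostep delta s.1 x.1, phstep mu s.1 x.1 s.2 x.2).


Lemma fst_run (Sigma Gamma Q : Type) (K : nat) (delta : Q -> Sigma -> option Q)
  (mu : Q -> Sigma -> seq Gamma) w s :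
  (foldl (@stp Sigma Gamma Q K delta mu) s w).1 = foldl (ostep delta) s.1 (unzip1 w).
Proof. by elim: w s => [|x w IH] s //=; rewrite IH. Qed.

Lemma run_M (Sigma Gamma Q : Type) (K : nat) (delta : Q -> Sigma -> option Q)
  (mu : Q -> Sigma -> seq Gamma) v oq :
  foldl (@stp Sigma Gamma Q K delta mu) (oq, None) (zip v (nseq (size v) ord_max)) =
  (foldl (ostep delta) oq v, None).
Proof.
elim: v oq => [|a v IH] oq //=.
have -> : @stp _ _ _ K delta mu (oq, None) (a, ord_max) = (ostep delta oq a, None :> option (option Gamma)).
  by rewrite /stp /= ?eqxx.
exact: IH.
Qed.

Lemma run_Z (Sigma Gamma Q : Type) (K : nat) (delta : Q -> Sigma -> option Q)
  (mu : Q -> Sigma -> seq Gamma) v oq c :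
  foldl (@stp Sigma Gamma Q K delta mu) (oq, Some c) (zip v (nseq (size v) ord0)) =
  (foldl (ostep delta) oq v, Some c).
Proof.
elim: v oq => [|a v IH] oq //=.
have -> : @stp _ _ _ K delta mu (oq, Some c) (a, ord0) = (ostep delta oq a, Some c) by rewrite /stp /= ?eqxx.
exact: IH.
Qed.

Lemma run_None (Sigma Gamma Q : Type) (K : nat) (delta : Q -> Sigma -> option Q)
  (mu : Q -> Sigma -> seq Gamma) w oq :
  (foldl (@stp Sigma Gamma Q K delta mu) (oq, Some None) w).2 = Some None.
Proof.
elim: w oq => [|x w IH] oq //=.
have -> : @stp _ _ _ K delta mu (oq, Some None) x = (ostep delta oq x.1, Some None) by rewrite /stp /=; case: ifP.
exact: IH.
Qed.

Definition pseq (K n i j : nat) : seq 'I_K.+2 :=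
  nseq i ord_max ++ inord j.+1 :: nseq (n - i.+1) ord0.

Lemma run_ptr (Sigma Gamma Q : Type) (K : nat) (delta : Q -> Sigma -> option Q)
  (mu : Q -> Sigma -> seq Gamma) u oq i j : i < size u -> j < K ->
  foldl (@stp Sigma Gamma Q K delta mu) (oq, None) (zip u (pseq K (size u) i j)) =
  (foldl (ostep delta) oq u,
   Some (ohead (drop j (mu'' mu (foldl (ostep delta) oq (take i u)) (drop i u))))).
Proof.
move=> iu jK.
case Hd: (drop i u) => [|a r]; first by move: (size_drop i u); rewrite Hd /= => /esym/eqP; rewrite subn_eq0 leqNgt iu.
have Hu : u = take i u ++ a :: r by rewrite -Hd cat_take_drop.
have Hs : size (take i u) = i by rewrite size_takel // ltnW.
have Hr : size r = size u - i.+1.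
  by rewrite subnS -size_drop Hd.
rewrite {1}Hu /pseq zip_cat; last by rewrite size_nseq.
rewrite foldl_cat -{2}Hs run_M /= -Hr.
set q1 := foldl (ostep delta) oq (take i u).
have -> : @stp _ _ _ K delta mu (q1, None) (a, inord j.+1) =
   (ostep delta q1 a, Some (ohead (drop j (mu' mu q1 a)))).
  rewrite /stp /phstep /= -!val_eqE /= inordK; last by rewrite ltnS ltnW.
  by rewrite eqSS (ltn_eqF jK).
have -> : foldl (ostep delta) oq u = foldl (ostep delta) (ostep delta q1 a) r.
  by rewrite {1}Hu foldl_cat.
exact: run_Z.
Qed.

Lemma run_post_aux (Sigma Gamma Q : Type) (K : nat) (delta : Q -> Sigma -> option Q)
  (mu : Q -> Sigma -> seq Gamma) u b oq x c : size b = size u ->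
  (foldl (@stp Sigma Gamma Q K delta mu) (oq, Some x) (zip u b)).2 = Some (Some c) ->
  b = nseq (size u) ord0.
Proof.
elim: u b oq => [|a u IH] [|b0 b] oq //= [Hs].
rewrite /stp /=; case: eqP => [->|_]; first by move/IH => ->.
by rewrite run_None.
Qed.

Lemma run_nonptr (Sigma Gamma Q : Type) (K : nat) (delta : Q -> Sigma -> option Q)
  (mu : Q -> Sigma -> seq Gamma) u b oq c : size b = size u ->
  (foldl (@stp Sigma Gamma Q K delta mu) (oq, None) (zip u b)).2 = Some (Some c) ->
  exists i j, [/\ i < size u, j < K & b = pseq K (size u) i j].
Proof.
elim: u b oq => [|a u IH] [|b0 b] oq //= [Hs].
have -> : @stp _ _ _ K delta mu (oq, None) (a, b0) = (ostep delta oq a, phstep mu oq a None b0) by [].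
rewrite /phstep; case: eqP => [->|Hm].
  move/IH => /(_ Hs) [i [j [H1 H2 H3]]].
  by exists i.+1, j; rewrite H3.
case: eqP => [_|H0]; first by rewrite run_None.
move/(run_post_aux Hs) ->.
have b0p : 0 < b0 by rewrite lt0n; apply/eqP => h; apply: H0; apply: val_inj.
have b0K : b0 < K.+1.
  have := ltn_ord b0; rewrite ltnS leq_eqVlt => /orP [/eqP h|//].
  by case: Hm; apply: val_inj.
exists 0, b0.-1; split => //.
  by rewrite -ltnS prednK.
rewrite /pseq /= subn1 /=; congr (_ :: _).
by apply: val_inj; rewrite /= prednK // inordK.
Qed.

Definition out_of (Gamma : Type) (p : option (option Gamma)) : seq Gamma :=
  if p is Some (Some c) then [:: c] else [::].

Lemma out_of_ohead (Gamma : Type) (s : seq Gamma) : out_of (Some (ohead s)) = take 1 s.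
Proof. by case: s => //= ? ?; rewrite take0. Qed.

Lemma flatten_take1 (Gamma : Type) (s : seq Gamma) k m :
  flatten [seq take 1 (drop j s) | j <- iota m k] = take k (drop m s).
Proof.
elim: k m => [|k IH] m /=; first by rewrite take0.
by rewrite IH -[k.+1]/(1 + k) takeD drop_drop addnC addn1.
Qed.

Definition ptrf (K i j k : nat) : 'I_K.+2 :=
  if k < i then ord_max else if k == i then inord j.+1 else ord0.
Definition ptr (K n i j : nat) : n.-tuple 'I_K.+2 := [tuple ptrf K i j k | k < n].

Lemma tnth_ptr K n i j (k : 'I_n) : tnth (ptr K n i j) k = ptrf K i j k.
Proof. by rewrite tnth_mktuple. Qed.

Lemma ptrf_gt K i j k : i < k -> ptrf K i j k = ord0.
Proof. by move=> ik; rewrite /ptrf ltnNge ltnW //= gtn_eqF. Qed.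

Lemma ptrf_eq K i j : j < K -> val (ptrf K i j i) = j.+1.
Proof. by move=> jK; rewrite /ptrf ltnn eqxx /= inordK // ltnS ltnW. Qed.

Lemma tval_ptr K n i j : i < n -> tval (ptr K n i j) = pseq K n i j.
Proof.
move=> iN.
have -> : tval (ptr K n i j) = map (ptrf K i j) (iota 0 n).
  by rewrite /= -val_enum_ord -map_comp.
have -> : iota 0 n = iota 0 i ++ i :: iota i.+1 (n - i.+1).
  by rewrite -{1}(subnKC (ltnW iN)) iotaD add0n -(subnSK iN).
rewrite map_cat /= /pseq; congr (_ ++ _ :: _).
- have -> : map (ptrf K i j) (iota 0 i) = map (fun _ => ord_max) (iota 0 i).
    by apply/eq_in_map => k; rewrite mem_iota add0n => /andP [_ ki]; rewrite /ptrf ki.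
  by rewrite map_constE size_iota.
- by rewrite /ptrf ltnn eqxx.
- have -> : map (ptrf K i j) (iota i.+1 (n - i.+1)) = map (fun _ => ord0) (iota i.+1 (n - i.+1)).
    by apply/eq_in_map => k; rewrite mem_iota => /andP [ik _]; rewrite ptrf_gt.
  by rewrite map_constE size_iota.
Qed.

Lemma ptr_lt K n i j i' j' : i < n -> i' < n -> j < K -> j' < K ->
  (i < i') || ((i == i') && (j < j')) ->
  lex_lt (@ltB K.+2) (ptr K n i j) (ptr K n i' j').
Proof.
move=> iN i'N jK j'K /orP [ii'|/andP [/eqP <- jj']].
- apply/existsP; exists (Ordinal i'N); rewrite !tnth_ptr /ltB /= ptrf_gt // ptrf_eq //=.
  apply/forallP => k; apply/implyP => /= ik.
  by rewrite !tnth_ptr !ptrf_gt // (ltn_trans ii' ik).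
- apply/existsP; exists (Ordinal iN); rewrite !tnth_ptr /ltB /= !ptrf_eq //= ltnS jj' /=.
  apply/forallP => k; apply/implyP => /= ik.
  by rewrite !tnth_ptr !ptrf_gt.
Qed.

Definition ptrlist (K n : nat) := [seq ptr K n i j | i <- iota 0 n, j <- iota 0 K].

Lemma ptr_pairwise_aux K n l m : m + l <= n ->
  pairwise (@lex_lt _ (@ltB K.+2) n) [seq ptr K n i j | i <- iota m l, j <- iota 0 K].
Proof.
elim: l m => [|l IH] m H //.
rewrite [iota _ _]/= allpairs_cons pairwise_cat.
have mN : m < n by apply: leq_trans H; rewrite addnS ltnS leq_addr.
apply/and3P; split.
- apply/allrelP => x y /mapP [j jin ->] /allpairsP [[i' j'] [/= i'in j'in ->]].
  move: jin j'in i'in; rewrite !mem_iota /= => jK j'K /andP [mi' i'l].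
  apply: ptr_lt => //; last by rewrite mi'.
  by apply: leq_trans H; rewrite addnS -addSn.
- rewrite pairwise_map.
  apply: (@sub_in_pairwise _ (mem (iota 0 K)) ltn).
  + move=> j j'; rewrite !mem_iota /= => jK j'K jj'.
    by apply: ptr_lt => //; rewrite eqxx jj' orbT.
  + by apply/allP.
  + by rewrite -sorted_pairwise ?iota_ltn_sorted //; exact: ltn_trans.
- by apply: IH; rewrite addSnnS.
Qed.

Lemma ptr_sorted K n : sorted (@leL K.+2 n) (ptrlist K n).
Proof.
rewrite sorted_pairwise; last exact: leL_trans.
apply: (sub_pairwise _ (@ptr_pairwise_aux K n n 0 (leqnn _))).
by move=> x y h; rewrite /leL h orbT.
Qed.

Lemma ptr_uniq K n : uniq (ptrlist K n).
Proof.
apply: allpairs_uniq; rewrite ?iota_uniq //.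
move=> [i j] [i' j'] /allpairsP [[a b] [/= ai bi [-> ->]]] /allpairsP [[a' b'] [/= ai' bi' [-> ->]]] /= E.
move: ai bi ai' bi'; rewrite !mem_iota /= => aN bK a'N b'K.
have irr : forall x : n.-tuple 'I_K.+2, lex_lt (@ltB K.+2) x x -> False := fun x hh => lex_asym hh hh.
case: (ltngtP a a') => Ha.
- by have := @ptr_lt K n a b a' b' aN a'N bK b'K; rewrite Ha E => /(_ isT) /irr.
- by have := @ptr_lt K n a' b' a b a'N aN b'K bK; rewrite Ha E => /(_ isT) /irr.
- subst a'; case: (ltngtP b b') => Hb.
  + by have := @ptr_lt K n a b a b' aN aN bK b'K; rewrite Hb eqxx orbT E => /(_ isT) /irr.
  + by have := @ptr_lt K n a b' a b aN aN b'K bK; rewrite Hb eqxx orbT E => /(_ isT) /irr.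
  + by rewrite Hb.
Qed.

Lemma dfa_stp (Sigma S : Type) (P : pred S) (g : S -> Sigma -> S) s w :
  dfa_accepts P (fun s x => Some (g s x)) s w = P (foldl g s w).
Proof. by elim: w s => //= x w IH s; rewrite IH. Qed.

Lemma foldr_some (T G : Type) (s : seq T) (g : T -> option (seq G)) (h : T -> seq G) :
  (forall x, g x = Some (h x)) ->
  foldr (fun b acc => obind (fun w => omap (fun r => w ++ r) acc) (g b)) (Some [::]) s =
  Some (flatten (map h s)).
Proof. by move=> H; elim: s => //= x s ->; rewrite H. Qed.

Lemma foldr_none (T G : Type) (s : seq T) (g : T -> option (seq G)) :
  (forall x, g x = None) -> 0 < size s ->
  foldr (fun b acc => obind (fun w => omap (fun r => w ++ r) acc) (g b)) (Some [::]) s = None.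
Proof. by move=> H; case: s => //= x s _; rewrite H. Qed.

Lemma flatten_filter (T G : Type) (p : pred T) (h : T -> seq G) s :
  (forall x, ~~ p x -> h x = [::]) -> flatten (map h (filter p s)) = flatten (map h s).
Proof. by move=> H; elim: s => //= x s IH; case: ifP => px //=; rewrite IH // H // px. Qed.

Lemma flatten_allpairs (S T G : Type) (f : S -> T -> seq G) s t :
  flatten [seq f x y | x <- s, y <- t] = flatten [seq flatten [seq f x y | y <- t] | x <- s].
Proof. by elim: s => //= x s IH; rewrite flatten_cat IH. Qed.

Theorem mainTheorem7 (Sigma Gamma : finType) (g : transduction Sigma Gamma) :
  sequential g -> Lex1 g.
Proof.
move=> [Q [q0 [F [delta [mu Hg]]]]].
pose K := \max_(p : Q * Sigma) size (mu p.1 p.2).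
have HK : forall oq a, size (mu' mu oq a) <= K.
  by move=> [q|] a //=; exact: (@leq_bigmax _ (fun p : Q * Sigma => size (mu p.1 p.2)) (q, a)).
pose s0 : option Q * option (option Gamma) := (Some q0, None).
pose runw (w : seq (Sigma * 'I_K.+2)) := foldl (@stp Sigma Gamma Q K delta mu) s0 w.
pose f : transduction (Sigma * 'I_K.+2) Gamma :=
  fun w => if accq F (runw w).1 then Some (out_of (runw w).2) else None.
pose og (p : option (option Gamma)) : option Gamma := if p is Some (Some c) then Some c else None.
exists ('I_K.+2 : finType), (@ltB K.+2), f; split.
- exact: ltB_slo.
- exists #|{: option Gamma}|.
  exists (fun i w => accq F (runw w).1 && (og (runw w).2 == enum_val i)).
  exists (fun i => if enum_val i is Some c then [:: c] else [::]).
  split.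
  + move=> i.
    exists ((option Q * option (option Gamma))%type : finType), s0,
      (fun s => accq F s.1 && (og s.2 == enum_val i)),
      (fun s x => Some (@stp Sigma Gamma Q K delta mu s x)).
    by move=> w; rewrite dfa_stp.
  + by move=> i; case: enum_val.
  + move=> i j w ij /andP [_ /eqP Hi] /andP [_ /eqP Hj].
    by move: ij; rewrite -(enum_val_inj (etrans (esym Hi) Hj)) eqxx.
  + move=> i w /andP [Ha /eqP Ho]; rewrite /f Ha -Ho.
    by case: (runw w).2 => [[c|]|].
  + move=> w Hn; rewrite /f; case Ha: accq => //; exfalso.
    by move: (Hn (enum_rank (og (runw w).2))); rewrite Ha enum_rankK eqxx.
- move=> u; rewrite Hg seq_run_eq /maplex.
  have Hf : forall b : (size u).-tuple 'I_K.+2, f (tensor u b) =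
     if accq F (foldl (ostep delta) (Some q0) u) then Some (out_of (runw (zip u b)).2) else None.
    by move=> b; rewrite /f /tensor /runw fst_run unzip1_zip ?size_tuple.
  case HA: (accq F _).
  + rewrite (@foldr_some _ _ _ (fun b : (size u).-tuple 'I_K.+2 => f (tensor u b))
               (fun b => out_of (runw (zip u b)).2)); last by move=> b; rewrite Hf HA.
    congr Some.
    pose h := fun b : (size u).-tuple 'I_K.+2 => out_of (runw (zip u b)).2.
    have Hnp : forall b, ~~ (b \in ptrlist K (size u)) -> h b = [::].
      move=> b; apply: contraNeq => hb.
      case E: (runw (zip u b)).2 => [[c|]|]; rewrite /h E in hb => //.
      have [i [j [iu jK Eb]]] := run_nonptr (size_tuple b) E.
      have -> : b = ptr K (size u) i j by apply: val_inj; rewrite /= tval_ptr.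
      by apply: allpairs_f; rewrite mem_iota.
    rewrite -(flatten_filter _ Hnp).
    have -> : filter (mem (ptrlist K (size u))) (lex_enum (@ltB K.+2) (size u)) = ptrlist K (size u).
      apply: (sorted_eq (@leL_trans _ _) (@leL_anti _ _)).
      - apply: sorted_filter; [exact: leL_trans | exact: lex_enum_sorted].
      - exact: ptr_sorted.
      - apply: uniq_perm; first by rewrite filter_uniq // /lex_enum sort_uniq enum_uniq.
          exact: ptr_uniq.
        by move=> x; rewrite mem_filter /lex_enum mem_sort mem_enum in_setT andbT.
    rewrite /ptrlist map_allpairs flatten_allpairs out_seq_iota.
    congr flatten; apply/eq_in_map => i; rewrite mem_iota /= => iu.
    have -> : [seq h (ptr K (size u) i j) | j <- iota 0 K] =
      [seq take 1 (drop j (mu'' mu (foldl (ostep delta) (Some q0) (take i u)) (drop i u))) | j <- iota 0 K].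
      apply/eq_in_map => j; rewrite mem_iota /= => jK.
      by rewrite /h tval_ptr // /runw /s0 run_ptr // out_of_ohead.
    rewrite flatten_take1 drop0 [take K _]take_oversize //.
    by case: (drop i u) => [|a r] //; exact: HK.
  + rewrite (@foldr_none _ _ _ (fun b : (size u).-tuple 'I_K.+2 => f (tensor u b))) //.
      by move=> b; rewrite Hf HA.
    have Hx : [tuple (ord0 : 'I_K.+2) | _ < size u] \in lex_enum (@ltB K.+2) (size u).
      by rewrite /lex_enum mem_sort mem_enum in_setT.
    by case: (lex_enum _ _) Hx.
Qed.
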